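(* Let $h,m$ be positive integers and let $f:\mathbb N\to\mathbb N$ be an increasing computable function such that for every satisfiable $\mathrm{CC}^h[m]$-circuit $\Gamma$ with $n$ inputs, among $2^{f(|\Gamma|)}$ independent uniformly random tuples from $\{0,1\}^n$ there is, with probability at least $1/2$, a tuple on which $\Gamma$ outputs $1$. Then $f^{-1}(n)\le\gamma_{h,m}(n+1)$ (for every $n$ for which $\gamma_{h,m}(n+1)$ is defined).
   Context: For an integer $m\ge 1$ and $A\subseteq\{0,\dots,m-1\}$, a gate $\mathrm{MOD}_m^A$ takes finitely many Boolean inputs (counted with multiplicity) and outputs $1$ if their sum modulo $m$ lies in $A$, and $0$ otherwise. A $\mathrm{CC}^h[m]$-circuit is a depth-$h$ Boolean circuit all of whose gates are of the form $\mathrm{MOD}_m^A$ ($A$ may vary between gates), with Boolean variable inputs and multiple wires allowed. $|\Gamma|$ is the number of gates of $\Gamma$. $\gamma_{h,m}(n)$ is the size of the smallest $\mathrm{CC}^h[m]$-circuit computing the $n$-ary conjunction $\mathrm{AND}_n$ (partial function). For an increasing function $f$, $f^{-1}(k)$ is the largest $n$ with $f(n)\le k$. *)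

(* Defs.v *)
From mathcomp Require Import all_boot all_order.
Set Implicit Arguments. Unset Strict Implicit. Unset Printing Implicit Defensive.

(* CC^h[m] circuits as DAGs: a circuit is a nonempty list of gates; each gate
   may read input variables (WVar j, j < n) or strictly earlier gates
   (WGate k); the output of the circuit is its last gate.  Multiple wires are
   modelled by repetitions in the input list of a gate. *)
Inductive wire := WVar of nat | WGate of nat.

(* a gate MOD_m^A : (A, list of input wires) *)
Definition gate := (seq nat * seq wire)%type.
Definition circuit := seq gate.

Definition wire_val (x vals : seq bool) (w : wire) : bool :=
  match w with WVar j => nth false x j | WGate k => nth false vals k end.

Definition gate_val (m : nat) (x vals : seq bool) (g : gate) : bool :=
  ((\sum_(w <- g.2) (wire_val x vals w : nat)) %% m \in g.1).

Definition gate_vals (m : nat) (x : seq bool) (C : circuit) : seq bool :=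
  foldl (fun vals g => rcons vals (gate_val m x vals g)) [::] C.

Definition eval (m : nat) (C : circuit) (x : seq bool) : bool :=
  last false (gate_vals m x C).

Definition wire_depth (ds : seq nat) (w : wire) : nat :=
  match w with WVar _ => 0 | WGate k => nth 0 ds k end.

Definition gate_depths (C : circuit) : seq nat :=
  foldl (fun ds g => rcons ds (\max_(w <- g.2) wire_depth ds w).+1) [::] C.

Definition depth (C : circuit) : nat := \max_(d <- gate_depths C) d.

Definition csize (C : circuit) : nat := size C.

Definition wf_circuit (m n : nat) (C : circuit) : Prop :=
  C <> [::] /\
  forall i, i < size C ->
    all (fun a => a < m) (nth ([::], [::]) C i).1 /\
    all (fun w => match w with WVar j => j < n | WGate k => k < i end)
        (nth ([::], [::]) C i).2.

Definition CC_circuit (h m n : nat) (C : circuit) : Prop :=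
  wf_circuit m n C /\ depth C <= h.

Definition satisfiable (m n : nat) (C : circuit) : Prop :=
  exists x : n.-tuple bool, eval m C x.

Definition computes_AND (m n : nat) (C : circuit) : Prop :=
  forall x : n.-tuple bool, eval m C x = all id x.

(* gamma_{h,m}(n) is defined and equals s *)
Definition gamma_is (h m n s : nat) : Prop :=
  (exists C, [/\ CC_circuit h m n C, computes_AND m n C & csize C = s]) /\
  (forall C, CC_circuit h m n C -> computes_AND m n C -> s <= csize C).

(* Pr[among N independent uniform tuples of {0,1}^n some satisfies C] >= 1/2,
   stated by counting over the uniform space of N-tuples of inputs. *)
Definition hit_prob_ge_half (m n N : nat) (C : circuit) : Prop :=
  #|{ffun 'I_N -> n.-tuple bool}| <=
    2 * #|[set t : {ffun 'I_N -> n.-tuple bool} | [exists i, eval m C (t i)]]|.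

(* Main.v *)
Require Import Defs.
From mathcomp Require Import all_boot all_order.

Lemma union_bound (T I : finType) (A : I -> {set T}) (r : seq I) :
  #|\bigcup_(i <- r) A i| <= \sum_(i <- r) #|A i|.
Proof.
elim: r => [|i r IH]; first by rewrite !big_nil cards0.
rewrite !big_cons; apply: leq_trans (leq_card_setU _ _) _.
by rewrite leq_add2l.
Qed.

Lemma card_fix (N : nat) (T : finType) (i : 'I_N) (a : T) :
  #|[set t : {ffun 'I_N -> T} | t i == a]| = #|T| ^ N.-1.
Proof.
pose F := fun j : 'I_N => if j == i then pred1 a else predT.
have -> : #|[set t : {ffun 'I_N -> T} | t i == a]| = #|family F|.
  apply: eq_card => t; rewrite inE.
  apply/idP/idP => [/eqP ti | /familyP H].
    by apply/familyP => j; rewrite /F; case: (j =P i) => [->|_]; rewrite ?inE ?ti /=.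
  by move: (H i); rewrite /F eqxx.
rewrite card_family foldrE big_map big_enum /=.
rewrite (bigD1 i) //= /F eqxx card1 mul1n.
rewrite (eq_bigr (fun _ => #|T|)); last by move=> j /negbTE ->; done.
rewrite prod_nat_const.
have -> : #|[pred j : 'I_N | j != i]| = #|predC1 i| by apply: eq_card.
by rewrite cardC1 card_ord.
Qed.

Theorem proposition6p3 (h m : nat) (f : nat -> nat) :
  0 < h -> 0 < m ->
  {homo f : x y / x < y} ->
  (forall (n : nat) (C : circuit), CC_circuit h m n C -> satisfiable m n C ->
     hit_prob_ge_half m n (2 ^ f (csize C)) C) ->
  forall n s : nat, gamma_is h m n.+1 s ->
  forall k : nat, f k <= n -> k <= s.
Proof.
move=> _ _ fmono Hyp n s [[C [CC Cand Cs]] _] k fk.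
rewrite leqNgt; apply/negP => lt_sk.
have fs : f s < n := leq_trans (fmono _ _ lt_sk) fk.
have sat : satisfiable m n.+1 C.
  exists [tuple of nseq n.+1 true]; rewrite Cand /=.
  by apply/allP => x /nseqP [->].
move: (Hyp _ _ CC sat); rewrite /hit_prob_ge_half Cs.
set N := 2 ^ f s.
pose a : n.+1.-tuple bool := [tuple of nseq n.+1 true].
set S := [set t | _].
have sub : S \subset \bigcup_(i < N) [set t : {ffun 'I_N -> n.+1.-tuple bool} | t i == a].
  apply/subsetP => t; rewrite inE => /existsP [i]; rewrite Cand => Hi.
  apply/bigcupP; exists i => //; rewrite inE; apply/eqP.
  apply: eq_from_tnth => j; rewrite tnth_nseq.
  by move/allP: Hi; apply; apply: mem_tnth.
have cS : #|S| <= N * (2 ^ n.+1) ^ N.-1.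
  apply: leq_trans (subset_leq_card sub) _.
  have U := union_bound _ _ (fun i : 'I_N => [set t : {ffun 'I_N -> n.+1.-tuple bool} | t i == a]) (index_enum _).
  apply: leq_trans U _.
  rewrite (eq_bigr (fun _ => (2 ^ n.+1) ^ N.-1)); last first.
    by move=> i _; rewrite card_fix card_tuple card_bool.
  by rewrite sum_nat_const card_ord.
rewrite card_ffun card_tuple card_bool card_ord => H.
have Npos : 0 < N by rewrite expn_gt0.
have : (2 ^ n.+1) ^ N <= 2 * (N * (2 ^ n.+1) ^ N.-1) by apply: leq_trans H _; rewrite leq_mul2l cS orbT.
have E : (2 ^ n.+1) ^ N = 2 ^ n.+1 * (2 ^ n.+1) ^ N.-1 by rewrite -expnS prednK.
rewrite E mulnA leq_mul2r expn_eq0 /= /N -expnS leq_exp2l //.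
by rewrite expn_eq0 /= ltnS leqNgt fs.
Qed.
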